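(* Let $\mathbf{a}\in\mathbb{C}^n$, $\beta>0$ and $f(\mathbf{z})=\frac12|\mathbf{a}^*\mathbf{z}|^2+\frac{\beta}{2}\|\mathbf{z}\|_4^4$. If $\mathbf{z}$ is a local minimizer of $f$ on $\mathbb{CS}^{n-1}$ with $\mathbf{a}^*\mathbf{z}=0$, then $\mathbf{z}$ has at most one zero component, and all nonzero components of $\mathbf{z}$ have the same modulus.
   Context: $\mathbb{CS}^{n-1}=\{\mathbf{z}\in\mathbb{C}^n:\|\mathbf{z}\|_2=1\}$; $\|\mathbf{z}\|_4^4=\sum_k|z_k|^4$. *)

(* Defs.v *)
From HB Require Import structures.
From mathcomp Require Import all_boot all_order all_algebra.
From mathcomp Require Import complex.
From mathcomp Require Import reals.
Set Implicit Arguments. Unset Strict Implicit. Unset Printing Implicit Defensive.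
Import Order.TTheory GRing.Theory Num.Theory.
Local Open Scope ring_scope.

Section Defs.
Variable R : realType.

Definition cmod (x : R[i]) : R := Num.sqrt (complex.Re x ^+ 2 + complex.Im x ^+ 2).

Definition cdot n (a z : 'I_n -> R[i]) : R[i] := \sum_k conjc (a k) * z k.

Definition norm2 n (z : 'I_n -> R[i]) : R := Num.sqrt (\sum_k cmod (z k) ^+ 2).

Definition norm4_4 n (z : 'I_n -> R[i]) : R := \sum_k cmod (z k) ^+ 4.

Definition on_csphere n (z : 'I_n -> R[i]) : Prop := norm2 z = 1.

Definition fobj n (a : 'I_n -> R[i]) (beta : R) (z : 'I_n -> R[i]) : R :=
  2^-1 * cmod (cdot a z) ^+ 2 + beta / 2 * norm4_4 z.

Definition local_min_on_csphere n (g : ('I_n -> R[i]) -> R) (z : 'I_n -> R[i]) : Prop :=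
  on_csphere z /\
  exists eps : R, 0 < eps /\
    forall w : 'I_n -> R[i], on_csphere w -> norm2 (fun k => w k - z k) < eps ->
      g z <= g w.
End Defs.

(* Main.v *)
Require Import Defs.
From HB Require Import structures.
From mathcomp Require Import all_boot all_order all_algebra.
From mathcomp Require Import complex.
From mathcomp Require Import reals.
From mathcomp Require Import ring lra.
Import Order.TTheory GRing.Theory Num.Theory.
Local Open Scope ring_scope.
Local Open Scope complex_scope.

Set Implicit Arguments.
Section S.
Variable R : realType.
Definition n2 (x : R[i]) : R := complex.Re x ^+ 2 + complex.Im x ^+ 2.
Lemma n2_ge0 x : 0 <= n2 x. Proof. rewrite /n2; nra. Qed.
Lemma cmod2 x : cmod x ^+ 2 = n2 x. Proof. by rewrite /cmod sqr_sqrtr // n2_ge0. Qed.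
Lemma cmod4 x : cmod x ^+ 4 = n2 x ^+ 2. Proof. by rewrite -cmod2 -exprM. Qed.
Lemma n2_0 : n2 0 = 0. Proof. by rewrite /n2 /= expr0n /= addr0. Qed.
Lemma n2_eq0 x : n2 x = 0 -> x = 0.
Proof. case: x => a b; rewrite /n2 /= => h. have ha : a = 0 by nra. have hb : b = 0 by nra.
by rewrite ha hb. Qed.
Lemma n2_lin (c t : R) x y : x = 0 \/ y = 0 ->
  n2 (c%:C * x + t%:C * y) = c^+2 * n2 x + t^+2 * n2 y.
Proof. case=> ->; case: x => a b; case: y => e f; rewrite /n2 /=; ring. Qed.
Lemma n2_sc (c : R) x : n2 (c%:C * x) = c^+2 * n2 x.
Proof. case: x => a b; rewrite /n2 /=; ring. Qed.
Lemma n2_conjM x y : n2 (conjc x * y) = n2 x * n2 y.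
Proof. case: x => a b; case: y => e f; rewrite /n2 /=; ring. Qed.
Lemma n2_add x y : n2 (x + y) <= 2 * n2 x + 2 * n2 y.
Proof. case: x => a b; case: y => e f; rewrite /n2 /=.
have := sqr_ge0 (a - e); have := sqr_ge0 (b - f); nra. Qed.
Lemma n2_conj x : n2 (conjc x) = n2 x.
Proof. case: x => a b; rewrite /n2 /=; ring. Qed.
Lemma n2N x : n2 (- x) = n2 x.
Proof. case: x => a b; rewrite /n2 /=; ring. Qed.
Lemma n2_1 : n2 1 = 1.
Proof. by rewrite /n2 /= expr0n /= addr0 expr1n. Qed.
Lemma n2_lin_sq (c t : R) x y : x = 0 \/ y = 0 ->
  n2 (c%:C * x + t%:C * y) ^+ 2 = c^+4 * n2 x ^+ 2 + t^+4 * n2 y ^+2.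
Proof. case=> ->; case: x => a b; case: y => e f; rewrite /n2 /=; ring. Qed.
Lemma n2_lin_m (c t : R) x y : x = 0 \/ y = 0 ->
  n2 (c%:C * x + t%:C * y - x) = (c - 1)^+2 * n2 x + t^+2 * n2 y.
Proof. case=> ->; case: x => a b; case: y => e f; rewrite /n2 /=; ring. Qed.
Lemma n2_scm (c : R) x : n2 (c%:C * x - x) = (c - 1)^+2 * n2 x.
Proof. case: x => a b; rewrite /n2 /=; ring. Qed.

Lemma sum_two (V : nmodType) n (g : 'I_n -> V) j k : j != k ->
  (forall i, i != j -> i != k -> g i = 0) -> \sum_i g i = g j + g k.
Proof.
move=> jk h; rewrite (bigD1 j) //= (bigD1 k) 1?eq_sym //= big1 ?addr0 //.
by move=> i /andP [h1 h2]; apply: h.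
Qed.

Lemma norm2E n (w : 'I_n -> R[i]) : norm2 w = Num.sqrt (\sum_k n2 (w k)).
Proof. by rewrite /norm2; congr Num.sqrt; apply: eq_bigr => i _; rewrite cmod2. Qed.
Lemma norm4E n (w : 'I_n -> R[i]) : norm4_4 w = \sum_k n2 (w k) ^+ 2.
Proof. by rewrite /norm4_4; apply: eq_bigr => i _; rewrite cmod4. Qed.
Lemma sum_n2_ge0 n (w : 'I_n -> R[i]) : 0 <= \sum_k n2 (w k).
Proof. by apply: sumr_ge0 => i _; apply: n2_ge0. Qed.
Lemma sphere_sum n (w : 'I_n -> R[i]) : on_csphere w -> \sum_k n2 (w k) = 1.
Proof.
rewrite /on_csphere norm2E => h.
by rewrite -(sqr_sqrtr (sum_n2_ge0 w)) h expr1n.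
Qed.
Lemma sum_sphere n (w : 'I_n -> R[i]) : \sum_k n2 (w k) = 1 -> on_csphere w.
Proof. by rewrite /on_csphere norm2E => ->; rewrite sqrtr1. Qed.
Lemma close_of n (w : 'I_n -> R[i]) eps : 0 < eps -> \sum_k n2 (w k) < eps ^+ 2 ->
  norm2 w < eps.
Proof.
move=> he h; rewrite norm2E.
have e : eps = Num.sqrt (eps ^+ 2) by rewrite sqrtr_sqr gtr0_norm.
by rewrite [X in _ < X]e ltr_sqrt // exprn_gt0.
Qed.
Lemma fobjE n (a w : 'I_n -> R[i]) beta :
  fobj a beta w = 2^-1 * n2 (cdot a w) + beta / 2 * \sum_k n2 (w k) ^+ 2.
Proof. by rewrite /fobj cmod2 norm4E. Qed.

Lemma smallT (c1 c2 c3 K1 K2 K3 : R) : 0 < c1 -> 0 < c2 -> 0 < c3 ->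
  0 <= K1 -> 0 <= K2 -> 0 <= K3 ->
  exists T, [/\ 0 < T, T <= 1, T * K1 < c1, T * K2 < c2 & T * K3 < c3].
Proof.
move=> h1 h2 h3 k1 k2 k3.
set x1 := K1 / c1; set x2 := K2 / c2; set x3 := K3 / c3.
have e1 : K1 = x1 * c1 by rewrite /x1 divfK // gt_eqF.
have e2 : K2 = x2 * c2 by rewrite /x2 divfK // gt_eqF.
have e3 : K3 = x3 * c3 by rewrite /x3 divfK // gt_eqF.
have g1 : 0 <= x1 by rewrite /x1 divr_ge0 // ltW.
have g2 : 0 <= x2 by rewrite /x2 divr_ge0 // ltW.
have g3 : 0 <= x3 by rewrite /x3 divr_ge0 // ltW.
set D := 1 + x1 + x2 + x3.
have hD : 0 < D by rewrite /D; lra.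
exists D^-1; split.
- by rewrite invr_gt0.
- by rewrite invf_le1 //; rewrite /D; lra.
- by rewrite mulrC -/(_ / D) ltr_pdivrMr // e1; rewrite /D; nra.
- by rewrite mulrC -/(_ / D) ltr_pdivrMr // e2; rewrite /D; nra.
- by rewrite mulrC -/(_ / D) ltr_pdivrMr // e3; rewrite /D; nra.
Qed.
Lemma aux1 (c T U : R): 0 <= c -> c^+2 = 1 - T*U -> 0 <= T*U -> (c-1)^+2 <= (T*U)^+2.
Proof. move=> h0 h1 h2.
have hc : c <= 1 by nra.
have : 1 - c <= T * U by nra.
nra. Qed.
Lemma aux2 (T U e: R): 0<T -> T<=1 -> 0<=U -> T*(U^+2+U) < e -> (T*U)^+2 + T*U < e.
Proof. move=> h0 h1 h2 h3. have : T * T * U^+2 <= T * U^+2 by nra. nra. Qed.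
Lemma aux3 (T U S V : R): 0<T -> T*(U^+2 * S + V) < 2 * U * S -> (1-T*U)^+2 * S + T^+2 * V < S.
Proof. move=> h0 h1. nra. Qed.
Lemma part1 n (a z : 'I_n -> R[i]) beta j k eps : 0 < beta -> j != k ->
  z j = 0 -> z k = 0 -> \sum_i n2 (z i) = 1 -> cdot a z = 0 -> 0 < eps ->
  exists w, [/\ on_csphere w, norm2 (fun i => w i - z i) < eps &
             fobj a beta w < fobj a beta z].
Proof.
move=> hb jk zj zk hs hc he.
have [uj [uk [hu hU]]] : exists uj uk, conjc (a j) * uj + conjc (a k) * uk = 0
    /\ 0 < n2 uj + n2 uk.
  case: (a j =P 0) => ha.
    exists 1, 0; rewrite ha conjc0 !mulr0 addr0 n2_1 n2_0 addr0; split; [exact: mul0r | exact: ltr01].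
  exists (conjc (a k)), (- conjc (a j)); split.
    by rewrite mulrN mulrC subrr.
  rewrite n2N !n2_conj; have := n2_ge0 (a k).
  have : n2 (a j) != 0 by apply/eqP => /n2_eq0.
  have := n2_ge0 (a j); rewrite neq_lt => g /orP [] g'; lra.
set U := n2 uj + n2 uk.
set S4 := \sum_i n2 (z i) ^+ 2.
have hS4 : 0 < S4.
  rewrite lt_def sumr_ge0 ?andbT => [|i _]; last by rewrite exprn_ge0 // n2_ge0.
  apply/eqP => /eqP; rewrite psumr_eq0 => [|i _]; last by rewrite exprn_ge0 // n2_ge0.
  move=> /allP h; move: hs; rewrite big1 => [|i _]; first by move=> /eqP; rewrite eq_sym oner_eq0.
  by have := h i (mem_index_enum i); rewrite /= sqrf_eq0 => /eqP.
set V := n2 uj ^+ 2 + n2 uk ^+ 2.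
have hV : 0 <= V by rewrite /V addr_ge0 // exprn_ge0 // n2_ge0.
have hU0 : 0 <= U by rewrite ltW.
have [T [hT0 hT1 hK1 hK2 hK3]] := @smallT (2 * U * S4) (eps ^+ 2) 1
   (U ^+ 2 * S4 + V) (U ^+ 2 + U) U
   ltac:(by rewrite !mulr_gt0) ltac:(by rewrite exprn_gt0) ltr01
   ltac:(by rewrite addr_ge0 // mulr_ge0 // ?exprn_ge0 // ltW)
   ltac:(by rewrite addr_ge0 // exprn_ge0) hU0.
set t := Num.sqrt T; set c := Num.sqrt (1 - T * U).
have ht : t ^+ 2 = T by rewrite /t sqr_sqrtr // ltW.
have hc2 : c ^+ 2 = 1 - T * U by rewrite /c sqr_sqrtr //; lra.
have hc0 : 0 <= c by rewrite /c sqrtr_ge0.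
set uv := fun i => if i == j then uj else if i == k then uk else 0.
have disj : forall i, z i = 0 \/ uv i = 0.
  move=> i; rewrite /uv; case: (i =P j) => [->|_]; first by left.
  case: (i =P k) => [->|_]; [by left | by right].
have offs : forall i, i != j -> i != k -> uv i = 0.
  by move=> i /negPf h1 /negPf h2; rewrite /uv h1 h2.
have uvj : uv j = uj by rewrite /uv eqxx.
have uvk : uv k = uk by rewrite /uv eq_sym (negPf jk) eqxx.
set w := fun i => c%:C * z i + t%:C * uv i.
have cw : cdot a w = 0.
  rewrite /cdot /w.
  transitivity (\sum_i (c%:C * (conjc (a i) * z i) + t%:C * (conjc (a i) * uv i))).
    by apply: eq_bigr => i _; ring.
  rewrite big_split /= -!mulr_sumr -/(cdot a z) hc mulr0 add0r.
  rewrite (@sum_two _ _ (fun i => conjc (a i) * uv i) _ _ jk).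
    by rewrite uvj uvk hu mulr0.
  by move=> i h1 h2; rewrite offs // mulr0.
have sU : \sum_i n2 (uv i) = U.
  rewrite (@sum_two _ _ (fun i => n2 (uv i)) _ _ jk) ?uvj ?uvk //.
  by move=> i h1 h2; rewrite offs // n2_0.
have sV : \sum_i n2 (uv i) ^+ 2 = V.
  rewrite (@sum_two _ _ (fun i => n2 (uv i) ^+ 2) _ _ jk) ?uvj ?uvk //.
  by move=> i h1 h2; rewrite offs // n2_0 expr0n.
exists w; split.
- apply: sum_sphere.
  transitivity (\sum_i (c ^+ 2 * n2 (z i) + t ^+ 2 * n2 (uv i))).
    by apply: eq_bigr => i _; rewrite /w n2_lin //; exact: disj.
  rewrite big_split /= -!mulr_sumr hs sU hc2 ht; ring.
- apply: close_of => //.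
  have -> : \sum_i n2 (w i - z i) = (c - 1) ^+ 2 + T * U.
    transitivity (\sum_i ((c - 1) ^+ 2 * n2 (z i) + t ^+ 2 * n2 (uv i))).
      by apply: eq_bigr => i _; rewrite /w n2_lin_m //; exact: disj.
    by rewrite big_split /= -!mulr_sumr hs sU ht mulr1.
  have hTU : 0 <= T * U by rewrite mulr_ge0 // ltW.
  have := @aux1 c T U hc0 hc2 hTU.
  have := @aux2 T U _ hT0 hT1 hU0 hK2.
  lra.
- rewrite !fobjE cw hc n2_0 mulr0 !add0r.
  have -> : \sum_i n2 (w i) ^+ 2 = c ^+ 4 * S4 + t ^+ 4 * V.
    transitivity (\sum_i (c ^+ 4 * n2 (z i) ^+ 2 + t ^+ 4 * n2 (uv i) ^+ 2)).
      by apply: eq_bigr => i _; rewrite /w n2_lin_sq //; exact: disj.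
    by rewrite big_split /= -!mulr_sumr sV.
  have -> : c ^+ 4 = (1 - T * U) ^+ 2 by rewrite -hc2 -exprM.
  have -> : t ^+ 4 = T ^+ 2 by rewrite -ht -exprM.
  rewrite ltr_pM2l ?divr_gt0 //.
  exact: aux3.
Qed.
Lemma aux4 (p s T : R) : 0 < p -> 0 < T -> s^+2 = T^+2 -> T < p -> 0 < p + s.
Proof. move=> h1 h2 h3 h4. nra. Qed.
Lemma aux5 (T p q : R) : 0 < T -> 0 < p -> 0 < q -> T * (p^-1 + q^-1) < 1 -> T < p.
Proof. move=> h1 h2 h3 h4.
have hq : 0 <= T * q^-1 by rewrite mulr_ge0 ?invr_ge0 // ltW.
have : T / p < 1 by move: h4; rewrite mulrDr; lra.
by rewrite ltr_pdivrMr // mul1r. Qed.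
Lemma aux6 (al p s T : R) : 0 <= al -> 0 < p -> al^+2 * p = p + s -> s^+2 = T^+2 ->
  (al-1)^+2 * p <= T^+2 / p.
Proof. move=> h1 h2 h3 h4. rewrite ler_pdivlMr // -h4.
have -> : s = (al^+2 - 1) * p by rewrite mulrBl mul1r h3; ring.
have h5 : 0 <= (al - 1)^+2 * (p * p) by rewrite mulr_ge0 ?sqr_ge0 // mulr_ge0 // ltW.
have : (al - 1)^+2 * (p * p) * 1 <= (al - 1)^+2 * (p * p) * (al + 1)^+2.
  by rewrite ler_wpM2l // ; nra.
have -> : ((al ^+ 2 - 1) * p) ^+ 2 = (al - 1)^+2 * (p * p) * (al + 1)^+2 by ring.
by rewrite mulr1 -mulrA -(mulrA _ p p). Qed.
Lemma aux7 (N X b T D S : R) : 0 < T -> 0 < b -> N <= 2 * (T^+2 * X) ->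
  T * (X + b) < b * D ->
  2^-1 * N + b / 2 * (S + (-2 * T * D + 2 * T^+2)) < 2^-1 * 0 + b / 2 * S.
Proof. move=> h1 h2 h3 h4.
have : 0 < T * (b * D - T * (X + b)) by rewrite mulr_gt0 // subr_gt0.
nra. Qed.
Lemma aux8 (T K e : R) : 0 < T -> T <= 1 -> 0 <= K -> T * K < e -> T^+2 * K < e.
Proof. move=> h1 h2 h3 h4. have : T * T * K <= T * K by rewrite ler_wpM2r // ler_piMl // ltW. 
rewrite -expr2; lra. Qed.

Lemma part2 n (a z : 'I_n -> R[i]) beta j k eps : 0 < beta ->
  z j != 0 -> z k != 0 -> n2 (z j) != n2 (z k) ->
  \sum_i n2 (z i) = 1 -> cdot a z = 0 -> 0 < eps ->
  exists w, [/\ on_csphere w, norm2 (fun i => w i - z i) < eps &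
             fobj a beta w < fobj a beta z].
Proof.
move=> hb zj zk hne hs hc he.
have jk : j != k by apply/eqP => e; rewrite e eqxx in hne.
set p := n2 (z j); set q := n2 (z k).
have hp : 0 < p by rewrite lt_def n2_ge0 andbT; apply/eqP => /n2_eq0 /eqP; apply/negP.
have hq : 0 < q by rewrite lt_def n2_ge0 andbT; apply/eqP => /n2_eq0 /eqP; apply/negP.
set D := `|p - q|.
have hD : 0 < D by rewrite /D normr_gt0 subr_eq0.
have [sg [hsg1 hsg2]] : exists sg : R, sg ^+ 2 = 1 /\ sg * (p - q) = - D.
  rewrite /D; case: (ltrP p q) => h.
    by exists 1; rewrite expr1n mul1r; split=> //; ring.
  by exists (-1); rewrite sqrrN expr1n; split=> //; ring.
set Aj := n2 (a j); set Ak := n2 (a k).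
have hAj : 0 <= Aj by apply: n2_ge0.
have hAk : 0 <= Ak by apply: n2_ge0.
have hX : 0 <= Aj / p + Ak / q by rewrite addr_ge0 // divr_ge0 // ltW.
have hpq : 0 <= p^-1 + q^-1 by rewrite addr_ge0 // invr_ge0 ltW.
have [T [hT0 hT1 hK1 hK2 hK3]] := @smallT (beta * D) (eps ^+ 2) 1
   (Aj / p + Ak / q + beta) (p^-1 + q^-1) (p^-1 + q^-1)
   ltac:(by rewrite mulr_gt0) ltac:(by rewrite exprn_gt0) ltr01
   ltac:(by rewrite addr_ge0 // ltW) hpq hpq.
set s := sg * T.
have hs2 : s ^+ 2 = T ^+ 2 by rewrite /s exprMn hsg1 mul1r.
have hs2' : (- s) ^+ 2 = T ^+ 2 by rewrite sqrrN.
have Tp : T < p by apply: (@aux5 T p q).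
have Tq : T < q by apply: (@aux5 T q p); rewrite // addrC.
have hps : 0 < p + s by apply: (@aux4 p s T).
have hqs : 0 < q + - s by apply: (@aux4 q (- s) T).
set al := Num.sqrt ((p + s) / p); set ga := Num.sqrt ((q + - s) / q).
have hal : al ^+ 2 * p = p + s.
  by rewrite /al sqr_sqrtr ?divfK ?gt_eqF // divr_ge0 // ltW.
have hga : ga ^+ 2 * q = q + - s.
  by rewrite /ga sqr_sqrtr ?divfK ?gt_eqF // divr_ge0 // ltW.
have al0 : 0 <= al by apply: sqrtr_ge0.
have ga0 : 0 <= ga by apply: sqrtr_ge0.
have Ej := @aux6 al p s T al0 hp hal hs2.
have Ek := @aux6 ga q (- s) T ga0 hq hga hs2'.
set w := fun i => if i == j then al%:C * z j else if i == k then ga%:C * z k else z i.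
have wj : w j = al%:C * z j by rewrite /w eqxx.
have wk : w k = ga%:C * z k by rewrite /w eq_sym (negPf jk) eqxx.
have woff : forall i, i != j -> i != k -> w i = z i.
  by move=> i /negPf h1 /negPf h2; rewrite /w h1 h2.
have dsum : forall g : R[i] -> R[i] -> R,
    (forall x, g x x = 0) ->
    \sum_i g (w i) (z i) = g (w j) (z j) + g (w k) (z k).
  move=> g g0; apply: (@sum_two _ _ (fun i => g (w i) (z i)) _ _ jk).
  by move=> i h1 h2; rewrite woff.
have dsumR : forall g : R -> R -> R,
    (forall x, g x x = 0) ->
    \sum_i g (n2 (w i)) (n2 (z i)) = g (n2 (w j)) p + g (n2 (w k)) q.
  move=> g g0; apply: (@sum_two _ _ (fun i => g (n2 (w i)) (n2 (z i))) _ _ jk).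
  by move=> i h1 h2; rewrite woff.
have nwj : n2 (w j) = p + s by rewrite wj n2_sc -hal mulrC.
have nwk : n2 (w k) = q + - s by rewrite wk n2_sc -hga mulrC.
exists w; split.
- apply: sum_sphere.
  have : \sum_i n2 (w i) - \sum_i n2 (z i) = 0.
    rewrite -sumrB (dsumR (fun x y => x - y)) => [|x]; last by rewrite subrr.
    rewrite nwj nwk; ring.
  rewrite hs; lra.
- apply: close_of => //.
  have -> : \sum_i n2 (w i - z i) = (al - 1) ^+ 2 * p + (ga - 1) ^+ 2 * q.
    rewrite (dsum (fun x y => n2 (x - y))) => [|x]; last by rewrite subrr n2_0.
    by rewrite wj wk !n2_scm.
  have := @aux8 T (p^-1 + q^-1) (eps ^+ 2) hT0 hT1 hpq hK2.
  move: Ej Ek; rewrite !mulrDr; lra.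
- rewrite !fobjE hc n2_0.
  have hQ : \sum_i n2 (w i) ^+ 2 = \sum_i n2 (z i) ^+ 2 + (-2 * T * D + 2 * T ^+ 2).
    have : \sum_i n2 (w i) ^+ 2 - \sum_i n2 (z i) ^+ 2 = -2 * T * D + 2 * T ^+ 2.
      rewrite -sumrB (dsumR (fun x y => x ^+ 2 - y ^+ 2)) => [|x]; last by rewrite subrr.
      rewrite nwj nwk.
      transitivity (2 * s * (p - q) + 2 * s ^+ 2); first by ring.
      rewrite hs2 /s.
      transitivity (2 * T * (sg * (p - q)) + 2 * T ^+ 2); first by ring.
      by rewrite hsg2; ring.
    lra.
  rewrite hQ.
  apply: (@aux7 _ (Aj / p + Ak / q)) => //.
  have ecd : cdot a w = conjc (a j) * (al%:C * z j - z j) + conjc (a k) * (ga%:C * z k - z k).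
    have -> : cdot a w = cdot a w - cdot a z by rewrite hc subr0.
    rewrite /cdot -sumrB.
    rewrite (@sum_two _ _ (fun i => conjc (a i) * w i - conjc (a i) * z i) _ _ jk) => [|i h1 h2]; last by rewrite woff // subrr.
    by rewrite wj wk !mulrBr.
  rewrite ecd; apply: le_trans (n2_add _ _) _.
  rewrite !n2_conjM !n2_scm -/Aj -/Ak -/p -/q.
  have h1 : Aj * ((al - 1) ^+ 2 * p) <= Aj * (T ^+ 2 / p) by rewrite ler_wpM2l.
  have h2 : Ak * ((ga - 1) ^+ 2 * q) <= Ak * (T ^+ 2 / q) by rewrite ler_wpM2l.
  have -> : T ^+ 2 * (Aj / p + Ak / q) = Aj * (T ^+ 2 / p) + Ak * (T ^+ 2 / q) by ring.
  lra.
Qed.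
End S.
Local Close Scope complex_scope.

Theorem theorem8 (R : realType) (n : nat) (a : 'I_n -> R[i]) (beta : R)
  (z : 'I_n -> R[i]) :
  0 < beta ->
  local_min_on_csphere (fobj a beta) z ->
  cdot a z = 0 ->
  (#|[set k | z k == 0%R]| <= 1)%N /\
  (forall j k : 'I_n, z j != 0 -> z k != 0 -> cmod (z j) = cmod (z k)).
Proof.
move=> hb [hsph [eps [he hmin]]] hc.
have hs := sphere_sum hsph.
split.
- rewrite leqNgt; apply/negP => /card_gt1P [j [k [hj hk jk]]].
  rewrite !inE in hj hk.
  have [w [h1 h2 h3]] := @part1 R n a z beta j k eps hb jk (eqP hj) (eqP hk) hs hc he.
  by have := lt_le_trans h3 (hmin w h1 h2); rewrite ltxx.
- move=> j k zj zk; apply/eqP; apply: contraT => hne.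
  have hn2 : n2 R (z j) != n2 R (z k).
    by apply: contra hne => /eqP e; apply/eqP; exact: (congr1 Num.sqrt e).
  have [w [h1 h2 h3]] := @part2 R n a z beta j k eps hb zj zk hn2 hs hc he.
  by have := lt_le_trans h3 (hmin w h1 h2); rewrite ltxx.
Qed.
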